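(* For every $r\in(0,\tfrac12]$ there exist a constant $C_r>0$ and infinitely many integers $N$ such that there is an ORN design on $N$ nodes that guarantees throughput $r$ and has maximum latency at most $C_r\,L^*(r,N)$.
   Context: Nodes are $[N]=\{1,\dots,N\}$. A connection schedule of size $N$ and period $T\ge1$ is a sequence of permutations $\pi_0,\dots,\pi_{T-1}$ of $[N]$; write $\pi_t=\pi_{t \bmod T}$ for all $t\in\mathbb Z$. Its virtual topology is the directed graph $G$ with vertex set $[N]\times\mathbb Z$ whose edges are the virtual edges $(i,t)\to(i,t+1)$ and the physical edges $(i,t)\to(\pi_t(i),t+1)$, for all $i\in[N]$, $t\in\mathbb Z$. The latency of a finite directed path in $G$ is its number of edges. For $a,b\in[N]$, $t\in\mathbb Z$, $\mathcal P(a,b,t)$ is the set of paths in $G$ from $(a,t)$ to some vertex $(b,t')$, and $\mathcal P$ is the set of all paths. A flow is a function $f:\mathcal P\to[0,\infty)$; the load on an edge $e$ is $F(f,e)=\sum_{P\ni e}f(P)$; $f$ is feasible if $F(f,e)\le 1$ for every physical edge $e$. An oblivious routing scheme $R$ assigns to each $(a,b,t)\in[N]\times[N]\times\mathbb Z$ a flow $R_{a,b,t}$ supported on $\mathcal P(a,b,t)$ with $\sum_P R_{a,b,t}(P)=1$, which is periodic: $R_{a,b,t+T}$ is obtained from $R_{a,b,t}$ by shifting every path by $T$ in the time coordinate. An ORN design on $N$ nodes is a connection schedule together with an oblivious routing scheme on its virtual topology; its maximum latency is the maximum latency of a path $P$ with $R_{a,b,t}(P)>0$ for some $a,b,t$.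 A demand function $D$ assigns to each $t\in\mathbb Z$ an $N\times N$ matrix $D(t)$ with nonnegative entries $D(t,a,b)$; it requests throughput equal to the supremum over $t$ of the maximum row sum or column sum of $D(t)$. The induced flow is $f(R,D)=\sum_{a,b,t}D(t,a,b)R_{a,b,t}$. The design guarantees throughput $r$ if $f(R,D)$ is feasible for every demand function $D$ requesting throughput at most $r$. For $r\in(0,\frac12]$, $(h,\varepsilon)$ denotes the unique solution in $\mathbb N\times(0,1]$ of $\frac1{2r}=h+1-\varepsilon$ (equivalently $h=\lfloor\frac1{2r}\rfloor$, $\varepsilon=h+1-\frac1{2r}$), and $L^*(r,N)=h\left(N^{1/(h+1)}+(\varepsilon N)^{1/h}\right)$. *)

(* Defs.v *)
From HB Require Import structures.
From mathcomp Require Import all_boot all_order all_algebra all_fingroup.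
From mathcomp Require Import all_classical all_reals all_analysis.
Set Implicit Arguments. Unset Strict Implicit. Unset Printing Implicit Defensive.
Import Order.TTheory GRing.Theory Num.Theory.
Local Open Scope classical_set_scope.
Local Open Scope ring_scope.

(* Nodes are 'I_N (i.e. [N] shifted to {0..N-1}); time is int.
   A connection schedule is a map  sched : int -> {perm 'I_N}  that is
   T-periodic with T >= 1 (i.e. sched t = pi_(t mod T)). *)
Definition is_schedule (N T : nat) (sched : int -> {perm 'I_N}) : Prop :=
  (0 < T)%N /\ forall t : int, sched (t + T%:Z) = sched t.

(* An edge of the virtual topology, written (i, t, phys): it goes out of
   vertex (i,t); if phys = true it is the physical edge (i,t) -> (pi_t i, t+1),
   otherwise it is the virtual edge (i,t) -> (i,t+1). *)
Definition edge (N : nat) := ('I_N * int * bool)%type.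

(* A finite directed path in G: its start vertex (i,t) and the sequence of
   edge kinds it takes (true = physical, false = virtual). *)
Definition vpath (N : nat) := ('I_N * int * seq bool)%type.

Fixpoint walk_edges N (sched : int -> {perm 'I_N}) (i : 'I_N) (t : int)
    (st : seq bool) : seq (edge N) :=
  match st with
  | [::] => [::]
  | b :: st' => (i, t, b) :: walk_edges sched (if b then sched t i else i) (t + 1) st'
  end.

Fixpoint walk_end N (sched : int -> {perm 'I_N}) (i : 'I_N) (t : int)
    (st : seq bool) : 'I_N :=
  match st with
  | [::] => i
  | b :: st' => walk_end sched (if b then sched t i else i) (t + 1) st'
  end.

Definition path_edges N (sched : int -> {perm 'I_N}) (P : vpath N) : seq (edge N) :=
  walk_edges sched P.1.1 P.1.2 P.2.

Definition latency N (P : vpath N) : nat := size P.2.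

Definition in_paths N (sched : int -> {perm 'I_N}) (a b : 'I_N) (t : int)
    (P : vpath N) : Prop :=
  P.1.1 = a /\ P.1.2 = t /\ walk_end sched P.1.1 P.1.2 P.2 = b.

Definition shift_path N (T : nat) (P : vpath N) : vpath N :=
  (P.1.1, P.1.2 + T%:Z, P.2).

Definition is_routing (R : realType) N (T : nat) (sched : int -> {perm 'I_N})
    (Rt : 'I_N -> 'I_N -> int -> vpath N -> R) : Prop :=
  [/\ (forall a b t P, 0 <= Rt a b t P),
      (forall a b t P, 0 < Rt a b t P -> in_paths sched a b t P),
      (forall a b t, (\esum_(P in [set: vpath N]) (Rt a b t P)%:E = 1)%E) &
      (forall a b t P, Rt a b (t + T%:Z) (shift_path T P) = Rt a b t P)].

Definition is_ORN_design (R : realType) N (T : nat) (sched : int -> {perm 'I_N})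
    (Rt : 'I_N -> 'I_N -> int -> vpath N -> R) : Prop :=
  is_schedule T sched /\ is_routing T sched Rt.

Definition max_latency_le (R : realType) N (Rt : 'I_N -> 'I_N -> int -> vpath N -> R)
    (L : R) : Prop :=
  forall a b t P, 0 < Rt a b t P -> (latency P)%:R <= L.

Definition demand_at_most (R : realType) N (D : int -> 'I_N -> 'I_N -> R) (r : R) : Prop :=
  [/\ (forall t a b, 0 <= D t a b),
      (forall t a, \sum_(b < N) D t a b <= r) &
      (forall t b, \sum_(a < N) D t a b <= r)].

Definition induced_flow (R : realType) N (Rt : 'I_N -> 'I_N -> int -> vpath N -> R)
    (D : int -> 'I_N -> 'I_N -> R) (P : vpath N) : \bar R :=
  \esum_(x in [set: 'I_N * 'I_N * int]) (D x.2 x.1.1 x.1.2 * Rt x.1.1 x.1.2 x.2 P)%:E.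

Definition load (R : realType) N (sched : int -> {perm 'I_N})
    (f : vpath N -> \bar R) (e : edge N) : \bar R :=
  \esum_(P in [set P : vpath N | e \in path_edges sched P]) f P.

Definition feasible (R : realType) N (sched : int -> {perm 'I_N})
    (f : vpath N -> \bar R) : Prop :=
  forall (i : 'I_N) (t : int), (load sched f (i, t, true) <= 1)%E.

Definition guarantees_throughput (R : realType) N (sched : int -> {perm 'I_N})
    (Rt : 'I_N -> 'I_N -> int -> vpath N -> R) (r : R) : Prop :=
  forall D : int -> 'I_N -> 'I_N -> R,
    demand_at_most D r -> feasible sched (induced_flow Rt D).

Definition hr (R : realType) (r : R) : nat := Num.truncn (1 / (2 * r)).
Definition epsr (R : realType) (r : R) : R := (hr r)%:R + 1 - 1 / (2 * r).
Definition Lstar (R : realType) (r : R) (N : nat) : R :=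
  (hr r)%:R * (powR (N%:R) ((hr r).+1%:R)^-1 + powR (epsr r * N%:R) ((hr r)%:R)^-1).

(* Main.v *)
Require Import Defs.
From HB Require Import structures.
From mathcomp Require Import all_boot all_order all_algebra all_fingroup.
From mathcomp Require Import all_classical all_reals all_analysis.
From mathcomp Require Import ring lra.
Import Order.TTheory GRing.Theory Num.Theory.
Local Open Scope ring_scope.

Section esum_lemmas.
Variable R : realType.
Local Open Scope ereal_scope.

Lemma esum_indT (T : choiceType) (p : T) (c : \bar R) : 0 <= c ->
  \esum_(y in [set: T]) (if y == p then c else 0) = c.
Proof.
move=> c0; transitivity (\esum_(i in [set p]) c); last exact: esum_set1.
rewrite (esum_mkcond [set p]); apply: eq_esum => y _.
by rewrite in_set1.
Qed.

Lemma esum_ind (T : choiceType) (S : set T) (p : T) (c : \bar R) : 0 <= c ->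
  \esum_(y in S) (if y == p then c else 0) = if p \in S then c else 0.
Proof.
move=> c0; rewrite esum_mkcond.
rewrite (eq_esum (b := fun y => if y == p then (if p \in S then c else 0) else 0)).
  by apply: esum_indT; case: ifP.
by move=> y _; case: eqP => [->|]; case: ifP.
Qed.

Lemma esum_pointsT (T I : choiceType) (r : seq I) (g : I -> T) (f : T -> \bar R) :
  (forall y, 0 <= f y) ->
  (forall y, f y = \sum_(k <- r) (if y == g k then f (g k) else 0)) ->
  \esum_(y in [set: T]) f y = \sum_(k <- r) f (g k).
Proof.
move=> f0 fE.
rewrite (eq_esum (b := fun y => \sum_(k <- r) (if y == g k then f (g k) else 0))); last first.
  by move=> y _; apply: fE.
rewrite esum_sum; last by move=> i j _ _; case: ifP.
by apply: eq_bigr => k _; apply: esum_indT.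
Qed.

Lemma esum_swap (T1 T2 : choiceType) (I : set T1) (J : set T2)
   (a : T1 -> T2 -> \bar R) : (forall i j, 0 <= a i j) ->
  \esum_(i in I) \esum_(j in J) a i j = \esum_(j in J) \esum_(i in I) a i j.
Proof.
move=> a0; rewrite (esum_esum (J := fun=> J)) // (esum_esum (J := fun=> I)) //.
rewrite (reindex_esum (J `*`` fun=> I) _ (fun x => (x.2, x.1))) //.
split=> //=.
- by move=> [i j] [/= ? ?].
- by move=> [i1 i2] [j1 j2] /= _ _ [] -> ->.
- by move=> [i1 i2] [? ?] /=; exists (i2, i1).
Qed.
End esum_lemmas.
Section Design.
Variables (h' m' : nat).
Local Notation h := h'.+1.
Local Notation m := m'.+1.
Definition G := {ffun 'I_h -> 'I_m}.
Local Notation N := #|G|.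
Definition TT := (h * m)%N.
Definition vv (i : 'I_N) : G := enum_val i.
Definition nd (g : G) : 'I_N := enum_rank g.
Lemma vvK : cancel vv nd. Proof. exact: enum_valK. Qed.
Lemma ndK : cancel nd vv. Proof. exact: enum_rankK. Qed.
Lemma vv_inj : injective vv. Proof. exact: can_inj vvK. Qed.

Definition uu (t : int) : nat := absz (t %% TT%:Z)%Z.
Definition Js (u : nat) : 'I_h := inord (u %/ m).
Definition Ss (u : nat) : 'I_m := inord (u %% m).
Definition cu (u : nat) : G := [ffun k => if k == Js u then Ss u else 0].
Definition tr (g : G) (i : 'I_N) : 'I_N := nd (vv i + g).
Lemma tr_inj g : injective (tr g).
Proof. by move=> i j /(congr1 vv); rewrite /tr !ndK => /addIr /vv_inj. Qed.
Definition sched (t : int) : {perm 'I_N} := perm (tr_inj (cu (uu t))).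
Definition bit (t : int) (x : G) : bool := x (Js (uu t)) == Ss (uu t).
Fixpoint bitsF (t : int) (x : G) (n : nat) : seq bool :=
  if n is n'.+1 then bit t x :: bitsF (t + 1) x n' else [::].
Fixpoint wsum (t : int) (st : seq bool) : G :=
  if st is b :: s then (if b then cu (uu t) else 0) + wsum (t + 1) s else 0.
Arguments TT : simpl never.
Definition mkp (a b : 'I_N) (t0 : int) (x : G) : vpath N :=
  (a, t0, bitsF t0 x TT ++ bitsF (t0 + TT%:Z) (vv b - vv a - x) TT).

Lemma intS (t : int) (k : nat) : t + k.+1%:Z = t + 1 + k%:Z.
Proof. by rewrite -addn1 PoszD addrA addrAC. Qed.

Lemma schedE t i : vv (sched t i) = vv i + cu (uu t).
Proof. by rewrite /sched permE /tr ndK. Qed.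

Lemma walk_endE i t st : vv (walk_end sched i t st) = vv i + wsum t st.
Proof.
elim: st i t => [|b st IH] i t /=; first by rewrite addr0.
rewrite IH; case: b; first by rewrite schedE addrA.
by rewrite add0r.
Qed.

Lemma walk_edgesE i t st i' t' :
  (i', t', true) \in walk_edges sched i t st ->
  exists2 k, (k < size st)%N &
    [/\ nth false st k, t' = t + k%:Z & vv i' = vv i + wsum t (take k st)].
Proof.
elim: st i t => [|b st IH] i t //=; rewrite in_cons => /orP[/eqP [-> -> <-]|].
  by exists 0%N => //; split; rewrite ?addr0.
move=> /IH [k kst [nk tk vk]]; exists k.+1; first by [].
split => //; first by rewrite tk -addrA; congr (_ + _); rewrite -addn1 PoszD addrC.
move: vk; case: b => /= ->; first by rewrite schedE addrA.
by rewrite add0r.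
Qed.

Lemma wsum_cat t s1 s2 : wsum t (s1 ++ s2) = wsum t s1 + wsum (t + (size s1)%:Z) s2.
Proof.
elim: s1 t => [|b s IH] t /=; first by rewrite add0r addr0.
by rewrite IH intS addrA.
Qed.

Lemma size_bitsF t x n : size (bitsF t x n) = n.
Proof. by elim: n t => //= n IH t; rewrite IH. Qed.

Lemma nth_bitsF t x n k : (k < n)%N -> nth false (bitsF t x n) k = bit (t + k%:Z) x.
Proof.
elim: n t k => // n IH t [|k] /= kn; first by rewrite addr0.
by rewrite IH // intS.
Qed.

Lemma wsum_bitsF t x n :
  wsum t (bitsF t x n) = \sum_(k < n) (if bit (t + k%:Z) x then cu (uu (t + k%:Z)) else 0).
Proof.
elim: n t => [|n IH] t /=; first by rewrite big_ord0.
rewrite big_ord_recl /= addr0 IH; congr (_ + _); apply: eq_bigr => k _.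
by rewrite /bump /= add1n intS.
Qed.

Lemma TT_gt0 : (0 < TT)%N. Proof. by rewrite /TT muln_gt0. Qed.

Lemma uuE t : (uu t)%:Z = (t %% TT%:Z)%Z.
Proof. by rewrite /uu gez0_abs // modz_ge0. Qed.

Lemma uu_lt t : (uu t < TT)%N.
Proof. by rewrite -ltz_nat uuE ltz_pmod // ltz_nat TT_gt0. Qed.

Lemma uuD t (k : nat) : uu (t + k%:Z) = ((uu t + k) %% TT)%N.
Proof.
by apply/eqP; rewrite -eqz_nat uuE -modz_nat PoszD uuE modzDml.
Qed.

Lemma uuT t : uu (t + TT%:Z) = uu t.
Proof. by apply/eqP; rewrite -eqz_nat !uuE modzDr. Qed.

Lemma sum_rot (V : nmodType) (n u0 : nat) (F : nat -> V) : (0 < n)%N ->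
  \sum_(k < n) F ((u0 + k) %% n)%N = \sum_(k < n) F k.
Proof.
move=> n0.
pose hh (k : 'I_n) : 'I_n := Ordinal (ltn_pmod (u0 + k) n0).
have hinj : injective hh.
  move=> k1 k2 /(congr1 val) /= /eqP; rewrite eqn_modDl !modn_small // => /eqP.
  exact: val_inj.
by rewrite [RHS](reindex_inj hinj).
Qed.

Lemma Js_val (u : nat) : (u < TT)%N -> Js u = (u %/ m)%N :> nat.
Proof. by move=> uT; rewrite /Js inordK // ltn_divLR // mulnC. Qed.

Lemma Ss_val (u : nat) : Ss u = (u %% m)%N :> nat.
Proof. by rewrite /Ss inordK // ltn_pmod. Qed.

Lemma sum_slots (x : G) :
  \sum_(u < TT) (if x (Js u) == Ss u then cu u else 0) = x.
Proof.
apply/ffunP => j; rewrite sum_ffunE.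
have us : (j * m + x j < TT)%N.
  rewrite /TT; apply: (@leq_trans (j.+1 * m)).
    by rewrite mulSn addnC ltn_add2r ltn_ord.
  by rewrite leq_mul2r ltn_ord orbT.
have Jus : Js (j * m + x j) = j.
  by apply: val_inj => /=; rewrite Js_val // divnMDl // divn_small // addn0.
have Sus : Ss (j * m + x j) = x j.
  by apply: val_inj => /=; rewrite Ss_val modnMDl modn_small.
rewrite (bigD1 (Ordinal us)) //= Jus Sus eqxx /cu ffunE Jus eqxx.
rewrite big1 ?addr0 // => u uu'.
case: ifP => [/eqP xu|_]; last by rewrite ffunE.
rewrite ffunE; case: ifP => // /eqP ju.
exfalso; move/eqP: uu'; apply; apply: val_inj => /=.
by rewrite [LHS](divn_eq u m) -(@Js_val u (ltn_ord u)) -Ss_val -xu -ju.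
Qed.

Lemma wsum_full t x : wsum t (bitsF t x TT) = x.
Proof.
rewrite wsum_bitsF /bit.
under eq_bigr => k _ do rewrite uuD.
rewrite (@sum_rot G TT (uu t) (fun u => if x (Js u) == Ss u then cu u else 0) TT_gt0).
exact: sum_slots.
Qed.

Lemma bitsF_T t x n : bitsF (t + TT%:Z) x n = bitsF t x n.
Proof.
by elim: n t => //= n IH t; rewrite /bit uuT addrAC IH.
Qed.

Lemma card_G_gt0 : (0 < #|G|)%N.
Proof. by apply/card_gt0P; exists 0. Qed.

Lemma sched_T t : sched (t + TT%:Z) = sched t.
Proof. by apply/permP => i; rewrite !permE /tr uuT. Qed.

Lemma mkp2 a b t0 x : (mkp a b t0 x).2 =
  bitsF t0 x TT ++ bitsF (t0 + TT%:Z) (vv b - vv a - x) TT.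
Proof. by []. Qed.
Lemma mkp1 a b t0 x : (mkp a b t0 x).1 = (a, t0).
Proof. by []. Qed.

Lemma mkp_end a b t0 x : walk_end sched a t0 (mkp a b t0 x).2 = b.
Proof.
apply: vv_inj; rewrite walk_endE mkp2 wsum_cat size_bitsF !wsum_full.
by rewrite [x + _]addrC subrK addrC subrK.
Qed.

Lemma mkp_T a b t0 x : mkp a b (t0 + TT%:Z) x = shift_path TT (mkp a b t0 x).
Proof. by rewrite /mkp /shift_path !bitsF_T. Qed.

Lemma shift_inj T : injective (@shift_path #|G| T).
Proof.
move=> [[i1 t1] s1] [[i2 t2] s2] /= [-> /addIr -> ->]. by [].
Qed.

Section Routing.
Variable R : realType.

Definition Rt (a b : 'I_#|G|) (t0 : int) (P : vpath #|G|) : R :=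
  \sum_(x : G) (#|G|%:R^-1 * (P == mkp a b t0 x)%:R).

Lemma Rt_ge0 a b t P : 0 <= Rt a b t P.
Proof. by apply: sumr_ge0 => x _; rewrite mulr_ge0 // invr_ge0. Qed.

Lemma Rt_supp a b t P : 0 < Rt a b t P -> exists x, P = mkp a b t x.
Proof.
move=> Rp; apply: contrapT => Hn; move: Rp; rewrite /Rt big1 ?ltxx //.
move=> x _; case: eqP => [e|]; last by rewrite mulr0.
by exfalso; apply: Hn; exists x.
Qed.

Lemma Rt_mass a b t :
  (\esum_(P in [set: vpath #|G|]) (Rt a b t P)%:E = 1)%E.
Proof.
under eq_esum => P _ do rewrite /Rt -sumEFin.
rewrite esum_sum; last first.
  by move=> P x _ _; rewrite lee_fin mulr_ge0 // invr_ge0.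
under eq_bigr => x _.
  rewrite (eq_esum (b := fun P => if P == mkp a b t x then (#|G|%:R^-1)%:E else 0%E)); last first.
    by move=> P _; case: eqP => _; rewrite ?mulr1 ?mulr0.
  rewrite esum_indT; last by rewrite lee_fin invr_ge0.
  over.
rewrite sumEFin sumr_const -[_ *+ _]mulr_natr mulVf //.
by rewrite pnatr_eq0 -lt0n card_G_gt0.
Qed.

Lemma Rt_T a b t P : Rt a b (t + TT%:Z) (shift_path TT P) = Rt a b t P.
Proof.
by apply: eq_bigr => x _; rewrite mkp_T (inj_eq (@shift_inj TT)).
Qed.


Lemma addffunE (f g : G) j : (f + g) j = f j + g j.
Proof. by rewrite ffunE. Qed.

Lemma count_coord (j : 'I_h) (s : 'I_m) :
  \sum_(x : G) ((x j == s)%:R : R) = #|G|%:R / m%:R.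
Proof.
have E s' : \sum_(x : G) ((x j == s')%:R : R) = \sum_(x : G) ((x j == s)%:R : R).
  pose del : G := [ffun k => if k == j then s' - s else 0].
  rewrite (reindex_inj (addIr del)); apply: eq_bigr => x _.
  rewrite addffunE /del ffunE eqxx; congr ((_ : bool)%:R).
apply/eqP/eqP => [|->]; last by rewrite addrC subrK.
  by move/(canRL (addrK (s'-s))) ->; rewrite opprB addrC subrK.
have tot : \sum_(s' : 'I_m) \sum_(x : G) ((x j == s')%:R : R) = #|G|%:R.
  rewrite exchange_big /= -sum1_card natr_sum; apply: eq_bigr => y _.
  rewrite (bigD1 (y j)) //= eqxx big1 ?addr0 // => s' /negbTE.
  by rewrite eq_sym => ->.
have : m%:R * \sum_(x : G) ((x j == s)%:R : R) = #|G|%:R.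
  by rewrite -tot (eq_bigr _ (fun s' _ => E s')) sumr_const card_ord mulr_natl.
by move=> <-; rewrite [RHS]mulrC mulKf // pnatr_eq0.
Qed.

Lemma count_vv (g : G) : \sum_(a : 'I_#|G|) ((vv a == g)%:R : R) = 1.
Proof.
rewrite (bigD1 (nd g)) //= ndK eqxx big1 ?addr0 // => a ag.
case: eqP => // vag; move: ag; rewrite -vag vvK eqxx //.
Qed.

Lemma path_edges_mkp a b t0 x : path_edges sched (mkp a b t0 x) =
  walk_edges sched a t0 (bitsF t0 x TT ++ bitsF (t0 + TT%:Z) (vv b - vv a - x) TT).
Proof. by []. Qed.

Lemma edge_window i t a b t0 x :
  (i, t, true) \in path_edges sched (mkp a b t0 x) ->
  exists2 k, (k < TT + TT)%N & t0 = t - k%:Z.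
Proof.
rewrite path_edges_mkp => /walk_edgesE [k]; rewrite size_cat !size_bitsF => kT [_ tk _].
by exists k => //; rewrite tk addrK.
Qed.

Lemma edge_phase1 i t a b k x : (k < TT)%N ->
  (i, t, true) \in path_edges sched (mkp a b (t - k%:Z) x) ->
  bit t x && (vv i == vv a + wsum (t - k%:Z) (take k (bitsF (t - k%:Z) x TT))).
Proof.
move=> kT; rewrite path_edges_mkp => /walk_edgesE [k']; rewrite size_cat !size_bitsF.
move=> _ [nk tk vk].
have kk : k' = k.
  have : k'%:Z = k%:Z by apply: (addrI (t - k%:Z)); rewrite -tk subrK.
  by case.
move: nk vk; rewrite kk nth_cat take_cat size_bitsF kT nth_bitsF // subrK => -> ->.
by rewrite eqxx.
Qed.

Lemma edge_phase2 i t a b k x : (TT <= k)%N ->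
  (i, t, true) \in path_edges sched (mkp a b (t - k%:Z) x) ->
  bit t (vv b - vv a - x) &&
  (vv i == vv b - (vv b - vv a - x) +
     wsum (t - k%:Z + TT%:Z) (take (k - TT) (bitsF (t - k%:Z + TT%:Z) (vv b - vv a - x) TT))).
Proof.
move=> kT; rewrite path_edges_mkp => /walk_edgesE [k']; rewrite size_cat !size_bitsF.
move=> k'T [nk tk vk].
have kk : k' = k.
  have : k'%:Z = k%:Z by apply: (addrI (t - k%:Z)); rewrite -tk subrK.
  by case.
subst k'.
have kTT : (k - TT < TT)%N by rewrite ltn_subLR.
have kTf : (k < TT)%N = false by rewrite ltnNge kT.
move: nk vk; rewrite nth_cat take_cat size_bitsF kTf nth_bitsF //.
rewrite wsum_cat size_bitsF wsum_full.
have -> : t - k%:Z + TT%:Z + (k - TT)%N%:Z = t.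
  by rewrite -subzn //; ring.
move=> -> ->; rewrite /= addrA; apply/eqP; congr (_ + _).
by rewrite -addrA -opprD subKr.
Qed.

Local Notation w := (#|G|%:R^-1 : R).

Lemma w_ge0 : 0 <= w. Proof. by rewrite invr_ge0. Qed.

Lemma ind_le (b1 b2 : bool) : (b1 -> b2) -> (b1%:R : R) <= b2%:R.
Proof. by case: b1; case: b2 => // /(_ isT). Qed.

Lemma L_row (D : 'I_#|G| -> 'I_#|G| -> R) (r : R)
   (E : 'I_#|G| -> 'I_#|G| -> G -> bool) (q : 'I_#|G| -> G -> bool) :
  (forall a b, 0 <= D a b) -> (forall a, \sum_b D a b <= r) ->
  (forall a b x, E a b x -> q a x) ->
  \sum_a \sum_b \sum_(x : G) (D a b * w * (E a b x)%:R) <=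
  r * w * \sum_(x : G) \sum_a ((q a x)%:R : R).
Proof.
move=> D0 Dr Eq.
apply: (@le_trans _ _ (\sum_a \sum_b \sum_(x : G) (D a b * w * (q a x)%:R))).
  apply: ler_sum => a _; apply: ler_sum => b _; apply: ler_sum => x _.
  by apply: ler_wpM2l; [rewrite mulr_ge0 // w_ge0 | apply: ind_le; apply: Eq].
apply: (@le_trans _ _ (\sum_a r * \sum_(x : G) (w * (q a x)%:R))).
  apply: ler_sum => a _.
  rewrite (eq_bigr (fun b => D a b * \sum_(x : G) (w * (q a x)%:R))); last first.
    by move=> b _; rewrite mulr_sumr; apply: eq_bigr => x _; rewrite mulrA.
  rewrite -mulr_suml; apply: ler_wpM2r => //.
  by apply: sumr_ge0 => x _; rewrite mulr_ge0 // w_ge0.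
rewrite -mulr_sumr -mulrA exchange_big /= le_eqVlt; apply/orP; left; apply/eqP.
congr (r * _); rewrite mulr_sumr; apply: eq_bigr => x _.
by rewrite mulr_sumr.
Qed.

Lemma L_col (D : 'I_#|G| -> 'I_#|G| -> R) (r : R)
   (E : 'I_#|G| -> 'I_#|G| -> G -> bool) (q : 'I_#|G| -> G -> bool) :
  (forall a b, 0 <= D a b) -> (forall b, \sum_a D a b <= r) ->
  (forall a b x, E a b x -> q b (vv b - vv a - x)) ->
  \sum_a \sum_b \sum_(x : G) (D a b * w * (E a b x)%:R) <=
  r * w * \sum_(x : G) \sum_b ((q b x)%:R : R).
Proof.
move=> D0 Dr Eq.
apply: (@le_trans _ _ (\sum_a \sum_b \sum_(x : G) (D a b * w * (q b (vv b - vv a - x))%:R))).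
  apply: ler_sum => a _; apply: ler_sum => b _; apply: ler_sum => x _.
  by apply: ler_wpM2l; [rewrite mulr_ge0 // w_ge0 | apply: ind_le; apply: Eq].
apply: (@le_trans _ _ (\sum_b r * \sum_(x : G) (w * (q b x)%:R))).
  rewrite exchange_big /=; apply: ler_sum => b _.
  rewrite (eq_bigr (fun a => D a b * \sum_(x : G) (w * (q b x)%:R))); last first.
    move=> a _; rewrite mulr_sumr.
    rewrite (reindex_inj (inv_inj (subKr (vv b - vv a)))) /=.
    by apply: eq_bigr => x _; rewrite subKr mulrA.
  rewrite -mulr_suml; apply: ler_wpM2r => //.
  by apply: sumr_ge0 => x _; rewrite mulr_ge0 // w_ge0.
rewrite -mulr_sumr -mulrA exchange_big /= le_eqVlt; apply/orP; left; apply/eqP.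
congr (r * _); rewrite mulr_sumr; apply: eq_bigr => x _.
by rewrite mulr_sumr.
Qed.

Lemma count_and (c : bool) (g gi : G) :
  \sum_(a : 'I_#|G|) ((c && (gi == vv a + g))%:R : R) = c%:R.
Proof.
case: c; last by rewrite big1.
transitivity (\sum_(a : 'I_#|G|) ((vv a == gi - g)%:R : R)); last exact: count_vv.
by apply: eq_bigr => a _; rewrite /= [vv a == _]eq_sym subr_eq.
Qed.

Lemma final_eq (r : R) t :
  r * w * \sum_(x : G) ((bit t x)%:R : R) = r / m%:R.
Proof.
rewrite /bit count_coord -mulrA; congr (r * _).
by rewrite mulrA mulVf ?mul1r // pnatr_eq0 -lt0n card_G_gt0.
Qed.

Lemma bound_k (D : int -> 'I_#|G| -> 'I_#|G| -> R) (r : R) i t k :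
  demand_at_most D r ->
  \sum_a \sum_b \sum_(x : G) (D (t - k%:Z) a b * w *
     ((i, t, true) \in path_edges sched (mkp a b (t - k%:Z) x))%:R) <= r / m%:R.
Proof.
move=> [D0 Drow Dcol].
case: (ltnP k TT) => kT.
  apply: le_trans; first
    apply: (@L_row (D (t - k%:Z)) r (fun a b x => (i, t, true) \in path_edges sched (mkp a b (t - k%:Z) x)) (fun a x => bit t x &&
      (vv i == vv a + wsum (t - k%:Z) (take k (bitsF (t - k%:Z) x TT))))).
    - by move=> a b; apply: D0.
    - by move=> a; apply: Drow.
    - by move=> a b x; apply: edge_phase1.
  rewrite (eq_bigr (fun x => ((bit t x)%:R : R))); last by move=> x _; rewrite count_and.
  by rewrite final_eq.
apply: le_trans; first
  apply: (@L_col (D (t - k%:Z)) r (fun a b x => (i, t, true) \in path_edges sched (mkp a b (t - k%:Z) x)) (fun b x => bit t x &&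
    (vv i == vv b + (- x + wsum (t - k%:Z + TT%:Z) (take (k - TT) (bitsF (t - k%:Z + TT%:Z) x TT)))))).
  - by move=> a b; apply: D0.
  - by move=> b; apply: Dcol.
  - by move=> a b x /(@edge_phase2 i t a b k x kT); rewrite addrA.
rewrite (eq_bigr (fun x => ((bit t x)%:R : R))); last by move=> x _; rewrite count_and.
by rewrite final_eq.
Qed.

Lemma inner_eq (d : R) (d0 : 0 <= d) a b t0 (e : edge #|G|) :
  (\esum_(P in [set P | e \in path_edges sched P]) (d * Rt a b t0 P)%:E =
   (\sum_(x : G) d * w * (e \in path_edges sched (mkp a b t0 x))%:R)%:E)%E.
Proof.
under eq_esum => P _ do rewrite /Rt mulr_sumr -sumEFin.
rewrite esum_sum; last first.
  by move=> P x _ _; rewrite lee_fin !mulr_ge0 // w_ge0.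
rewrite -sumEFin; apply: eq_bigr => x _.
rewrite (eq_esum (b := fun P => if P == mkp a b t0 x then (d * w)%:E else 0%E)); last first.
  by move=> P _; case: eqP => _; rewrite ?mulr1 ?mulr0 ?mulrA.
rewrite esum_ind; last by rewrite lee_fin mulr_ge0 // w_ge0.
have -> : (mkp a b t0 x \in [set P : vpath #|G| | e \in path_edges sched P]%classic) =
   (e \in path_edges sched (mkp a b t0 x)).
  by apply/idP/idP => [/set_mem|/mem_set].
by case: (e \in path_edges sched (mkp a b t0 x)); rewrite ?mulr1 ?mulr0.
Qed.

Lemma feasible_design (D : int -> 'I_#|G| -> 'I_#|G| -> R) (r : R) :
  2 * h%:R * r <= 1 -> demand_at_most D r -> feasible sched (induced_flow Rt D).
Proof.
move=> hr Dd i t; have [D0 _ _] := Dd.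
rewrite /load /induced_flow esum_swap; last first.
  by move=> P y; rewrite lee_fin mulr_ge0 // Rt_ge0.
under eq_esum => y _ do rewrite inner_eq //.
pose I := (('I_#|G| * 'I_#|G|) * 'I_(TT + TT))%type.
pose g (p : I) : ('I_#|G| * 'I_#|G| * int) := (p.1, t - (p.2 : nat)%:Z).
rewrite (@esum_pointsT _ _ I (index_enum I) g); first last.
- move=> [[a b] t0].
  case: (pselect (exists2 k, (k < TT + TT)%N & t0 = t - k%:Z)) => [[k kT t0k]|nw].
    rewrite [RHS](bigD1 ((a, b), Ordinal kT)) //= [X in (_ + X)%E]big1_seq ?adde0.
      by rewrite /g /= -t0k eqxx.
    move=> [[a' b'] k'] /andP [/= ne _]; case: eqP => //= [] [ea eb tk].
    exfalso; move/eqP: ne; apply; rewrite -ea -eb; congr (_, _); apply: val_inj => /=.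
    by move: tk; rewrite t0k => /addrI /oppr_inj [].
  rewrite [RHS]big1_seq; last first.
    move=> [[a' b'] k'] _; case: eqP => //= [] [_ _ tk].
    by exfalso; apply: nw; exists k'.
  rewrite big1 // => x _.
  case E : (_ \in _); last by rewrite mulr0.
  by have [k kT tk] := @edge_window i t a b t0 x E; exfalso; apply: nw; exists k.
- by move=> y; rewrite lee_fin sumr_ge0 // => x _; rewrite !mulr_ge0 // w_ge0.
rewrite sumEFin lee_fin.
rewrite (_ : \sum_(p <- index_enum I) _ = \sum_(k < TT + TT) \sum_a \sum_b \sum_(x : G)
   (D (t - k%:Z) a b * w * ((i, t, true) \in path_edges sched (mkp a b (t - k%:Z) x))%:R)); last first.
  under [RHS]eq_bigr => k _ do rewrite pair_big /=.
  rewrite [RHS]exchange_big [RHS]pair_big /=.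
  by apply: eq_bigr => -[[a b] k] _.
apply: (@le_trans _ _ (\sum_(k < TT + TT) r / m%:R)).
  by apply: ler_sum => k _; apply: bound_k.
rewrite sumr_const card_ord -[_ *+ (TT + TT)]mulr_natr /TT natrD natrM.
have m0 : (m%:R : R) != 0 by rewrite pnatr_eq0.
rewrite (_ : r / m%:R * (h%:R * m%:R + h%:R * m%:R) = 2 * h%:R * r) //.
by field.
Qed.
End Routing.
End Design.

Lemma latency_bound (R : realType) h' m' (e : R) (e0 : 0 < e) :
  ((TT h' m' + TT h' m')%:R : R) <= 2 / (e `^ (h'.+1%:R^-1)) *
   ((h'.+1)%:R * (powR (#|G h' m'|%:R) ((h'.+2)%:R^-1) +
                  powR (e * #|G h' m'|%:R) ((h'.+1)%:R^-1))).
Proof.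
have ep : 0 < e `^ (h'.+1%:R^-1) by apply: powR_gt0.
have NE : (#|G h' m'|%:R : R) `^ (h'.+1%:R^-1) = m'.+1%:R.
  rewrite card_ffun !card_ord natrX -powR_mulrn // -powRrM mulfV ?powRr1 //.
rewrite powRM ?(ltW e0) // NE.
apply: (@le_trans _ _ (2 / e `^ (h'.+1%:R^-1) * (h'.+1%:R * (e `^ (h'.+1%:R^-1) * m'.+1%:R)))).
  rewrite /TT natrD natrM le_eqVlt; apply/orP; left; apply/eqP.
  have ep0 : e `^ (h'.+1%:R^-1) != 0 by rewrite gt_eqF.
  by field.
apply: ler_wpM2l; first by rewrite divr_ge0 // ltW.
apply: ler_wpM2l => //; rewrite lerDr; exact: powR_ge0.
Qed.

Theorem theorem4 (R : realType) (r : R) :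
  0 < r -> r <= 2^-1 ->
  exists C : R, 0 < C /\
    forall M : nat, exists N : nat, (M < N)%N /\
      exists (T : nat) (sched : int -> {perm 'I_N})
             (Rt : 'I_N -> 'I_N -> int -> vpath N -> R),
        [/\ is_ORN_design T sched Rt,
            guarantees_throughput sched Rt r &
            max_latency_le Rt (C * Lstar r N)].
Proof.
move=> r0 rh.
have x1 : 1 <= 1 / (2 * r).
  by rewrite ler_pdivlMr ?mulr_gt0 // mul1r; lra.
have x0 : 0 <= 1 / (2 * r) by lra.
have h1 : (0 < hr r)%N by rewrite /hr truncn_gt0.
have eps0 : 0 < epsr r.
  by rewrite /epsr; have := truncnS_gt (1 / (2 * r)); rewrite -/(hr r) -natr1; lra.
have hr2 : 2 * (hr r)%:R * r <= 1.
  have := truncn_le (1 / (2 * r)); rewrite x0 -/(hr r) => hle.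
  have : 2 * r * (hr r)%:R <= 2 * r * (1 / (2 * r)) by rewrite ler_wpM2l // mulr_ge0 // ltW.
  rewrite mulrCA mulrA mul1r divff ?gt_eqF ?mulr_gt0 //; lra.
exists (2 / (epsr r `^ ((hr r)%:R^-1))); split.
  by rewrite divr_gt0 // powR_gt0.
move=> M.
have hE : hr r = (hr r).-1.+1 by rewrite prednK.
set h' := (hr r).-1 in hE.
exists #|G h' M|; split.
  rewrite card_ffun !card_ord expnS; apply: (@leq_trans M.+1) => //.
  by rewrite leq_pmulr // expn_gt0.
exists (TT h' M), (@sched h' M), (@Rt h' M R).
split.
- split; first by split; [exact: TT_gt0 | exact: sched_T].
  split.
  + exact: Rt_ge0.
  + move=> a b t P /Rt_supp [x ->]; split; first by []. split; first by []. exact: mkp_end.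
  + exact: Rt_mass.
  + exact: Rt_T.
- by move=> D Dd; apply: (@feasible_design h' M R D r _ Dd); move: hr2; rewrite {1}hE.
- move=> a b t P /Rt_supp [x ->].
  rewrite /latency mkp2 size_cat !size_bitsF /Lstar hE.
  exact: latency_bound.
Qed.
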